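(* Let $Z_0, Z_1, Z_2 \in \{0,1\}^K$ be fixed products, and let $Y(Z_1,Z_0)$, $Y(Z_2,Z_0)$, $Y(Z_1,Z_2)$ be binary choice outcomes of a respondent generated by the random utility model described in the context. Then the conditional distribution of $Y(Z_1,Z_0) - Y(Z_2,Z_0)$ given the event $\{Y(Z_1,Z_0) \neq Y(Z_2,Z_0)\}$ equals the distribution of $2Y(Z_1,Z_2) - 1$; that is, $$Y(Z_1,Z_0) - Y(Z_2,Z_0) \,\big|\, \{Y(Z_1,Z_0) \neq Y(Z_2,Z_0)\} \ \stackrel{d}{=}\ 2Y(Z_1,Z_2) - 1 .$$
   Context: Products are binary vectors in $\{0,1\}^K$. For two products $A,B$, the choice outcome $Y(A,B)\in\{0,1\}$ equals $1$ if the respondent chooses $A$ over $B$ and $0$ if $B$ is chosen. Choices follow the random utility maximisation model: each product $Z$ has utility $U(Z)+\epsilon$, where $U:\{0,1\}^K\to\mathbb{R}$ is a deterministic (representative) utility and the noise terms are independent standard Gumbel (type I extreme value) random variables, drawn independently for each product in each comparison; the alternative with larger total utility is chosen. Consequently $P(Y(A,B)=1) = \frac{e^{U(A)}}{e^{U(A)}+e^{U(B)}}$, and the outcomes of distinct paired comparisons (here $Y(Z_1,Z_0)$ and $Y(Z_2,Z_0)$) are independent. *)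

(* Defs.v *)
From HB Require Import structures.
From mathcomp Require Import all_boot all_order all_algebra.
From mathcomp Require Import all_classical all_reals all_analysis.
Set Implicit Arguments. Unset Strict Implicit. Unset Printing Implicit Defensive.
Import Order.TTheory GRing.Theory Num.Theory.
Local Open Scope classical_set_scope.
Local Open Scope ring_scope.

Definition product (K : nat) := {ffun 'I_K -> bool}.

(* Logit choice probability: P(Y(A,B)=1) = e^{U A} / (e^{U A} + e^{U B}). *)
Definition logit_prob (R : realType) (K : nat) (U : product K -> R)
  (A B : product K) : R := expR (U A) / (expR (U A) + expR (U B)).

Definition ev (T : Type) (X : T -> bool) (b : bool) : set T := [set t | X t = b].

Definition bool_rv (d : measure_display) (T : measurableType d)
  (X : T -> bool) : Prop := forall b, measurable (ev X b).

Definition indep_bool (d : measure_display) (T : measurableType d) (R : realType)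
  (P : probability T R) (X Y : T -> bool) : Prop :=
  forall b1 b2, P (ev X b1 `&` ev Y b2) = (P (ev X b1) * P (ev Y b2))%E.

Definition condprob (d : measure_display) (T : measurableType d) (R : realType)
  (P : probability T R) (A B : set T) : R :=
  fine (P (A `&` B)) / fine (P B).

Definition b2R (R : realType) (b : bool) : R := (b : nat)%:R.

(* Main.v *)
Require Import Defs.
From HB Require Import structures.
From mathcomp Require Import all_boot all_order all_algebra.
From mathcomp Require Import all_classical all_reals all_analysis.
From mathcomp Require Import ring lra.
Import Order.TTheory GRing.Theory Num.Theory.
Local Open Scope classical_set_scope.
Local Open Scope ring_scope.

Lemma alg (R : realFieldType) (a b c : R) : 0 < a -> 0 < b -> 0 < c ->
  [/\ (a/(a+c))*(1-b/(b+c)) + (1 - a/(a+c))*(b/(b+c)) != 0,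
   (a/(a+c))*(1-b/(b+c)) / ((a/(a+c))*(1-b/(b+c)) + (1 - a/(a+c))*(b/(b+c))) = a/(a+b) &
   (1 - a/(a+c))*(b/(b+c)) / ((a/(a+c))*(1-b/(b+c)) + (1 - a/(a+c))*(b/(b+c))) = 1 - a/(a+b)].
Proof.
move=> ha hb hc.
have hac : a + c != 0 by rewrite gt_eqF // ltr_wpDr // ltW.
have hbc : b + c != 0 by rewrite gt_eqF // ltr_wpDr // ltW.
have hab : a + b != 0 by rewrite gt_eqF // ltr_wpDr // ltW.
have e1 : 1 - b/(b+c) = c/(b+c) by field; rewrite ?hac ?hbc ?hab.
have e2 : 1 - a/(a+c) = c/(a+c) by field; rewrite ?hac ?hbc ?hab.
have D : a/(a+c) * (c/(b+c)) + c/(a+c) * (b/(b+c)) = c*(a+b)/((a+c)*(b+c)) by field; rewrite ?hac ?hbc ?hab.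
have hcab : c * (a+b) != 0 by rewrite mulf_neq0 // gt_eqF.
rewrite e1 e2 D; split.
- by rewrite mulf_neq0 // invr_eq0 mulf_neq0.
- by field; rewrite ?hcab ?hac ?hbc ?hab /= gt_eqF.
- by field; rewrite ?hcab ?hac ?hbc ?hab /= gt_eqF.
Qed.

Theorem lemma2 (R : realType) (d : measure_display) (T : measurableType d)
  (P : probability T R) (K : nat) (U : product K -> R)
  (Z0 Z1 Z2 : product K) (Y10 Y20 Y12 : T -> bool) :
  bool_rv Y10 -> bool_rv Y20 -> bool_rv Y12 ->
  P (ev Y10 true) = (logit_prob U Z1 Z0)%:E ->
  P (ev Y20 true) = (logit_prob U Z2 Z0)%:E ->
  P (ev Y12 true) = (logit_prob U Z1 Z2)%:E ->
  indep_bool P Y10 Y20 ->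
  forall S : set R,
    condprob P [set t | b2R R (Y10 t) - b2R R (Y20 t) \in S]
               [set t | Y10 t != Y20 t]
    = fine (P [set t | 2 * b2R R (Y12 t) - 1 \in S]).
Proof.
move=> m10 m20 m12 h10 h20 h12 ind S.
have evF : forall X : T -> bool, bool_rv X -> P (ev X false) = (1 - P (ev X true))%E.
  move=> X mX; rewrite -probability_setC //; congr (P _).
  by apply/funext => t; apply/propext; rewrite /ev /=; case: (X t); split.
have hTF : P (ev Y10 true `&` ev Y20 false) =
   (logit_prob U Z1 Z0 * (1 - logit_prob U Z2 Z0))%:E.
  by rewrite ind evF // h10 h20.
have hFT : P (ev Y10 false `&` ev Y20 true) =
   ((1 - logit_prob U Z1 Z0) * logit_prob U Z2 Z0)%:E.
  by rewrite ind evF // h10 h20.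
have mA : forall b1 b2, measurable (ev Y10 b1 `&` ev Y20 b2).
  by move=> b1 b2; apply: measurableI.
have disj : (ev Y10 true `&` ev Y20 false) `&` (ev Y10 false `&` ev Y20 true) = set0.
  by apply/funext => t; apply/propext; rewrite /ev /=; split => // -[[-> _] [] ].
have hU : P ((ev Y10 true `&` ev Y20 false) `|` (ev Y10 false `&` ev Y20 true)) =
   (logit_prob U Z1 Z0 * (1 - logit_prob U Z2 Z0) + (1 - logit_prob U Z1 Z0) * logit_prob U Z2 Z0)%:E.
  by rewrite (measureU P (mA true false) (mA false true) disj) EFinD -hTF -hFT.
have hD : [set t | Y10 t != Y20 t] = (ev Y10 true `&` ev Y20 false) `|` (ev Y10 false `&` ev Y20 true).
  apply/funext => t; apply/propext; rewrite /ev /=.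
  case: (Y10 t); case: (Y20 t) => /=; split => //.
  1-4: try by move=> [[H1 H2]|[H1 H2]]; first [discriminate H1 | discriminate H2].
    by move=> _; left.
  by move=> _; right.
have h12F : P (ev Y12 false) = (1 - logit_prob U Z1 Z2)%:E by rewrite evF // h12.
have hN : [set t | b2R R (Y10 t) - b2R R (Y20 t) \in S] `&` [set t | Y10 t != Y20 t]
   = (if 1 \in S then ev Y10 true `&` ev Y20 false else set0) `|`
     (if -1 \in S then ev Y10 false `&` ev Y20 true else set0).
  apply/funext => t; apply/propext; rewrite /ev /b2R /=.
  case h1: (1 \in S); case h2: (-1 \in S) => /=;
  case: (Y10 t); case: (Y20 t) => /=; rewrite ?subrr ?subr0 ?sub0r ?h1 ?h2.
  1-16: by intuition (try discriminate).
have hR : [set t | 2 * b2R R (Y12 t) - 1 \in S]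
   = (if 1 \in S then ev Y12 true else set0) `|`
     (if -1 \in S then ev Y12 false else set0).
  have e1 : (2:R) * 1 - 1 = 1 by lra.
  have e2 : (2:R) * 0 - 1 = -1 by lra.
  apply/funext => t; apply/propext; rewrite /ev /b2R /=.
  case h1: (1 \in S); case h2: (-1 \in S) => /=;
  case: (Y12 t) => /=; rewrite ?e1 ?e2 ?h1 ?h2.
  1-8: by intuition (try discriminate).
have m12T : measurable (ev Y12 true) by [].
have m12F : measurable (ev Y12 false) by [].
have disj12 : ev Y12 true `&` ev Y12 false = set0.
  by apply/funext => t; apply/propext; rewrite /ev /=; split => // -[->].
have hU12 : P (ev Y12 true `|` ev Y12 false) = (logit_prob U Z1 Z2 + (1 - logit_prob U Z1 Z2))%:E.
  by rewrite (measureU P m12T m12F disj12) EFinD -h12 -h12F.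
rewrite /condprob hN hR hD hU.
case: (1 \in S); case: (-1 \in S); rewrite ?setU0 ?set0U ?measure0 /=.
all: rewrite ?hU ?hTF ?hFT ?hU12 ?h12 ?h12F /=.
all: have [Dn0 E1 E2] := @alg R _ _ _ (expR_gt0 (U Z1)) (expR_gt0 (U Z2)) (expR_gt0 (U Z0)).
all: rewrite /logit_prob ?E1 ?E2 ?mul0r //.
by rewrite divff // addrC subrK.
Qed.
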